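(* Let $G$ be a graph, $k$ a positive integer, $T\subseteq V(G)$ and $v\in T$. Let $(H,\ell)=\mathcal{C}^c_k(G,T)$. Construct a labeled graph $(H',\ell')$ as follows: for every node $x$ of $H$ set $\ell'(x)=\ell(x)|_{T\setminus\{v\}}$; then iteratively contract every edge between two nodes $x,y$ with $\ell'(x)=\ell'(y)$, assigning label $\ell'(z):=\ell'(x)$ to the resulting node $z$. Then $(H',\ell')=\mathcal{C}^c_k(G,T\setminus\{v\})$. Moreover, given any certificate $S$ for $(H,\ell)$, there is a certificate $S'$ for $(H',\ell')$ such that for every $k$-coloring $\gamma$ of $G$, the $\gamma$-node of $H'$ with respect to $S'$ is the node resulting from contracting the set of nodes that contains the $\gamma$-node of $H$ with respect to $S$.
   Context: A $k$-coloring of $G$ is a map $\alpha:V(G)\to\{1,\dots,k\}$ with $\alpha(u)\ne\alpha(v)$ for all edges $uv$. $\mathcal{C}_k(G)$ has the $k$-colorings as nodes, adjacent iff they differ on exactly one vertex. For $T\subseteq V(G)$, label each coloring $\gamma$ by $\gamma|_T$. A label component is a maximal set of colorings with the same label inducing a connected subgraph of $\mathcal{C}_k(G)$. The contracted solution graph $\mathcal{C}^c_k(G,T)=(H,\ell)$ has one node $x$ per label component $S_x$, distinct $x,y$ adjacent iff some $\gamma\in S_x,\gamma'\in S_y$ are adjacent in $\mathcal{C}_k(G)$, and $\ell(x)$ the common label on $S_x$; labeled graphs are identified up to label-preserving isomorphism. Contracting an edge $uv$ replaces $u,v$ by a new vertex adjacent to all former neighbors of $u$ or $v$ (no loops or multi-edges).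 A certificate for $(H,\ell)$ is an assignment of nonempty sets $S_x$ of $k$-colorings of $G$ to the nodes $x$ such that: the $S_x$ partition the $k$-colorings of $G$; $\gamma|_T=\ell(x)$ for $\gamma\in S_x$; adjacent nodes have distinct labels; each $S_x$ induces a connected subgraph of $\mathcal{C}_k(G)$; distinct $x,y$ are adjacent iff some $\gamma\in S_x$ and $\gamma'\in S_y$ are adjacent in $\mathcal{C}_k(G)$. The $\gamma$-node with respect to a certificate $S$ is the node $x$ with $\gamma\in S_x$. *)

(* Defs.v *)
From mathcomp Require Import all_boot.
Set Implicit Arguments. Unset Strict Implicit. Unset Printing Implicit Defensive.

Section Defs.
Variables (V : finType) (e : rel V) (k : nat).

(* maps V -> {0,..,k-1}; colours {1..k} are renamed to 'I_k *)
Definition col := {ffun V -> 'I_k}.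

(* label gamma|_T, encoded as a partial map: None outside T *)
Definition label := {ffun V -> option 'I_k}.

Definition is_kcoloring (g : col) : bool :=
  [forall u, forall w, e u w ==> (g u != g w)].

Definition radj (g d : col) : bool := #|[set u | g u != d u]| == 1.

Definition restr (T : {set V}) (g : col) : label :=
  [ffun u => if u \in T then Some (g u) else None].

Definition restr_lab (T : {set V}) (l : label) : label :=
  [ffun u => if u \in T then l u else None].

Definition induced_connected (S : {set col}) : bool :=
  [forall g in S, forall d in S,
     connect [rel a b | [&& a \in S, b \in S & radj a b]] g d].

Definition same_label_connected (T : {set V}) (S : {set col}) : bool :=
  [&& S != set0, [forall g in S, is_kcoloring g],
      [forall g in S, forall d in S, restr T g == restr T d]
    & induced_connected S].

Definition is_label_comp (T : {set V}) (S : {set col}) : bool :=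
  same_label_connected T S &&
  [forall S' : {set col}, (S \subset S') && same_label_connected T S' ==> (S' == S)].

Definition default_label : label := [ffun => None].

End Defs.

Record lgraph (L : Type) := LGraph {
  lnode : finType;
  ladj : rel lnode;
  llab : lnode -> L }.
Arguments lnode {L} l.
Arguments ladj {L} l _ _.
Arguments llab {L} l _.

Definition lab_iso (L : Type) (A B : lgraph L) : Prop :=
  exists f : lnode A -> lnode B,
    [/\ bijective f,
        forall x y, ladj B (f x) (f y) = ladj A x y
      & forall x, llab B (f x) = llab A x].

Section Cc.
Variables (V : finType) (e : rel V) (k : nat) (T : {set V}).

Definition cc_node := {S : {set col V k} | is_label_comp e T S}.

Definition cc_adj : rel cc_node := fun x y =>
  (x != y) && [exists g in val x, exists d in val y, radj g d].

Definition cc_lab (x : cc_node) : label V k :=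
  if [pick g in val x] is Some g then restr T g else default_label V k.

Definition Cc : lgraph (label V k) := @LGraph _ cc_node cc_adj cc_lab.

Definition certificate (H : lgraph (label V k)) (S : lnode H -> {set col V k}) : Prop :=
  (forall x, S x != set0) /\
  (forall x g, g \in S x -> is_kcoloring e g) /\
  (forall g, is_kcoloring e g -> exists x, g \in S x) /\
  (forall x y g, g \in S x -> g \in S y -> x = y) /\
  (forall x g, g \in S x -> restr T g = llab H x) /\
  (forall x y, ladj H x y -> llab H x <> llab H y) /\
  (forall x, induced_connected (S x)) /\
  (forall x y, x <> y ->
     (ladj H x y <-> exists g d, [/\ g \in S x, d \in S y & radj g d])).
End Cc.

Section Contract.
Variables (V : finType) (k : nat) (v : V) (H : lgraph (label V k)).

Definition lab' (x : lnode H) : label V k := restr_lab (~: [set v]) (llab H x).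

Definition eqlab_adj : rel (lnode H) := fun x y => ladj H x y && (lab' x == lab' y).

(* set of nodes of H merged into the node containing x *)
Definition block (x : lnode H) : {set lnode H} := [set y | connect eqlab_adj x y].

Definition blocks : {set {set lnode H}} := block @: [set: lnode H].

Definition cnode := {B : {set lnode H} | B \in blocks}.

Definition cblock (x : lnode H) : cnode := exist _ (block x) (imset_f block (in_setT x)).

Definition cadj : rel cnode := fun B C =>
  (B != C) && [exists x in val B, exists y in val C, ladj H x y].

Definition clab (B : cnode) : label V k :=
  if [pick x in val B] is Some x then lab' x else default_label V k.

Definition contracted : lgraph (label V k) := @LGraph _ cnode cadj clab.
End Contract.

(* Main.v *)
Require Import Defs.
From mathcomp Require Import all_boot.
Set Implicit Arguments. Unset Strict Implicit. Unset Printing Implicit Defensive.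

Lemma connect_pind (T : finType) (r : rel T) (P : T -> Prop) x y :
  P x -> (forall a b, connect r x a -> r a b -> P a -> P b) -> connect r x y -> P y.
Proof.
move=> Px step /connectP [p pth ->].
suff H : forall p z, connect r x z -> P z -> path r z p -> P (last z p).
  exact: H p x (connect0 _ _) Px pth.
elim=> [|w q IH] z cz Pz //= /andP [rzw pq].
apply: IH pq; first exact: connect_trans cz (connect1 rzw).
exact: step rzw Pz.
Qed.

Lemma connect_exit (T : finType) (r : rel T) (A : pred T) x y :
  connect r x y -> x \in A -> y \notin A -> exists a b, [/\ a \in A, b \notin A & r a b].
Proof.
move=> cxy xA yA.
case: (boolP [exists a, exists b, [&& a \in A, b \notin A & r a b]]).
  by move=> /existsP [a /existsP [b /and3P [? ? ?]]]; exists a, b.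
move=> /negP nex.
have : y \in A.
  apply: (connect_pind (P := fun z => z \in A)) cxy => // a b _ rab aA.
  apply/negPn/negP => bA; apply: nex; apply/existsP; exists a; apply/existsP; exists b.
  by rewrite aA bA rab.
by rewrite (negbTE yA).
Qed.

Section G.
Variables (V : finType) (e : rel V) (k : nat).

Definition R (A : {set col V k}) : rel (col V k) :=
  [rel a b | [&& a \in A, b \in A & radj a b]].

Lemma radj_sym : symmetric (@radj V k).
Proof.
move=> g d; rewrite /radj; congr (_ == _); apply: eq_card => u.
by rewrite !inE eq_sym.
Qed.

Lemma R_lift (A B : {set col V k}) a b : A \subset B -> connect (R A) a b -> connect (R B) a b.
Proof.
move=> sAB; apply: connect_sub => x y /= /and3P [xA yA rxy].
by apply: connect1; rewrite /R /= (subsetP sAB _ xA) (subsetP sAB _ yA) rxy.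
Qed.

Lemma icP (A : {set col V k}) : induced_connected A -> forall g d, g \in A -> d \in A -> connect (R A) g d.
Proof. by move=> /forall_inP H g d gA dA; have /forall_inP := H g gA; apply. Qed.

Lemma union_ic (A B : {set col V k}) a b : induced_connected A -> induced_connected B ->
  a \in A -> b \in B -> connect (R (A :|: B)) a b -> induced_connected (A :|: B).
Proof.
move=> cA cB aA bB cab.
have sA : A \subset A :|: B by apply: subsetUl.
have sB : B \subset A :|: B by apply: subsetUr.
have cs : connect_sym (R (A :|: B)).
  apply: sym_connect_sym => x y; rewrite /R /= radj_sym; by case: (x \in _); case: (y \in _).
apply/forall_inP => g gU; apply/forall_inP => d dU.
have toa : forall z, z \in A :|: B -> connect (R (A :|: B)) z a.
  move=> z; rewrite inE => /orP [zA|zB].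
    exact: R_lift sA (icP cA zA aA).
  rewrite cs; apply: connect_trans cab _; exact: R_lift sB (icP cB bB zB).
by apply: connect_trans (toa g gU) _; rewrite cs; apply: toa.
Qed.

Lemma union_slc2 (T : {set V}) (A B : {set col V k}) a b :
  same_label_connected e T A -> same_label_connected e T B ->
  a \in A -> b \in B -> restr T a = restr T b -> connect (R (A :|: B)) a b ->
  same_label_connected e T (A :|: B).
Proof.
move=> /and4P [nA cA lA iA] /and4P [nB cB lB iB] aA bB rab cab.
apply/and4P; split.
- apply/set0Pn; exists a; by rewrite inE aA.
- apply/forall_inP => x; rewrite inE => /orP [] ?;
    [exact: (forall_inP cA) | exact: (forall_inP cB)].
- have H : forall x, x \in A :|: B -> restr T x = restr T a.
    move=> x; rewrite inE => /orP [] xX.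
      by apply/eqP; have /forall_inP := forall_inP lA x xX; apply.
    rewrite rab.
    by apply/eqP; have /forall_inP := forall_inP lB x xX; apply.
  by apply/forall_inP => x xU; apply/forall_inP => y yU; rewrite (H x xU) (H y yU).
- exact: union_ic iA iB aA bB cab.
Qed.

Lemma union_slc (T : {set V}) (A B : {set col V k}) g :
  same_label_connected e T A -> same_label_connected e T B ->
  g \in A -> g \in B -> same_label_connected e T (A :|: B).
Proof. by move=> sA sB gA gB; apply: union_slc2 sA sB gA gB erefl (connect0 _ _). Qed.

Lemma lc_max (T : {set V}) (A B : {set col V k}) : is_label_comp e T A -> same_label_connected e T B ->
  A \subset B -> B = A.
Proof.
by move=> /andP [_ /forallP H] sB sAB; apply/eqP; have := H B; rewrite sAB sB.
Qed.

Lemma comp_meet (T : {set V}) (A B : {set col V k}) g : is_label_comp e T A -> is_label_comp e T B ->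
  g \in A -> g \in B -> A = B.
Proof.
move=> cA cB gA gB.
have U := union_slc (andP cA).1 (andP cB).1 gA gB.
by rewrite -(lc_max cA U (subsetUl _ _)) (lc_max cB U (subsetUr _ _)).
Qed.

End G.

Section C.
Variables (V : finType) (e : rel V) (k : nat) (T : {set V}).
Variables (H : lgraph (label V k)) (S : lnode H -> {set col V k}).
Hypothesis cert : certificate e T S.

Lemma cert_comp x : is_label_comp e T (S x).
Proof.
case: cert => nS [cS [cov [dis [lab [adl [ic adj]]]]]].
have slc : same_label_connected e T (S x).
  apply/and4P; split => //.
  - by apply/forall_inP => g; apply: cS.
  - by apply/forall_inP => g gS; apply/forall_inP => d dS; rewrite (lab _ _ gS) (lab _ _ dS).
apply/andP; split => //; apply/forallP => B; apply/implyP => /andP [sxB sB].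
rewrite eqEsubset sxB andbT; apply/subsetP => d dB.
case/set0Pn: (nS x) => g gx.
apply/negPn/negP => dx.
case/and4P: sB => _ cB lB iB.
have [a [b [ax bx /= /and3P [aB bB rab]]]] :=
  connect_exit (A := mem (S x)) (icP iB (subsetP sxB _ gx) dB) gx dx.
have [y by_] := cov b (forall_inP cB b bB).
have xy : x <> y by move=> exy; rewrite exy by_ in bx.
have := (adj x y xy).2 (ex_intro _ a (ex_intro _ b (And3 ax by_ rab))).
move=> /adl; rewrite -(lab _ _ ax) -(lab _ _ by_).
by have /forall_inP := forall_inP lB a aB => /(_ b bB) /eqP.
Qed.

Lemma cert_iso : lab_iso H (Cc e k T).
Proof.
case: cert => nS [cS [cov [dis [lab [adl [ic adj]]]]]].
pose f x : cc_node e k T := exist _ (S x) (cert_comp x).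
have finj : injective f.
  move=> x y /(congr1 val) /= Sxy.
  case/set0Pn: (nS x) => g gx; apply: (dis x y g gx); by rewrite -Sxy.
exists f; split.
- apply: inj_card_bij finj _.
  have : [set: cc_node e k T] \subset [set f x | x in [set: lnode H]].
    apply/subsetP => c _.
    case/andP: (valP c) => /and4P [nc cc _ _] _.
    case/set0Pn: nc => g gc.
    have [x gx] := cov g (forall_inP cc g gc).
    apply/imsetP; exists x => //; apply: val_inj => /=.
    have := comp_meet (cert_comp x) (valP c) gx gc. by [].

  move/subset_leq_card; rewrite cardsT => /leq_trans; apply.
  by rewrite -[X in _ <= X]cardsT leq_imset_card.
- move=> x y; rewrite /= /cc_adj /= (inj_eq finj).
  case: (eqVneq x y) => [<-|xy] /=.
    by case E: (ladj H x x) => //; have := adl x x E.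
  apply/idP/idP.
    move=> /existsP [g /andP [gx /existsP [d /andP [dy r]]]].
    by apply/(adj x y (elimN eqP xy)); exists g, d.
  move=> /(adj x y (elimN eqP xy)) [g [d [gx dy r]]].
  by apply/existsP; exists g; rewrite gx; apply/existsP; exists d; rewrite dy.
- move=> x; rewrite /= /cc_lab /=; case: pickP => [g gx|none].
    exact: lab _ _ gx.
  by case/set0Pn: (nS x) => g gx; rewrite none in gx.
Qed.
End C.

Section D.
Variables (V : finType) (e : rel V) (k : nat) (T : {set V}).

Lemma slc_lab (A : {set col V k}) g d : same_label_connected e T A ->
  g \in A -> d \in A -> restr T g = restr T d.
Proof.
by case/and4P=> _ _ /forall_inP lA _ gA dA; apply/eqP; have /forall_inP := lA g gA; apply.
Qed.

Lemma Cc_cert : certificate e T (H := Cc e k T) (fun x => val x).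
Proof.
split; [|split; [|split; [|split; [|split; [|split; [|split]]]]]].
- by move=> x; case/andP: (valP x) => /and4P [].
- by move=> x g gx; case/andP: (valP x) => /and4P [_ /forall_inP cc _ _] _; apply: cc.
- move=> g cg.
  have s1 : same_label_connected e T [set g].
    apply/and4P; split.
    + by apply/set0Pn; exists g; rewrite inE.
    + by apply/forall_inP => x; rewrite inE => /eqP ->.
    + by apply/forall_inP => x; rewrite inE => /eqP ->; apply/forall_inP => y; rewrite inE => /eqP ->.
    + by apply/forall_inP => x; rewrite inE => /eqP ->; apply/forall_inP => y; rewrite inE => /eqP ->; apply: connect0.
  have [A /maxsetP [sA mA] gA] := maxset_exists s1.
  have lc : is_label_comp e T A.
    apply/andP; split => //; apply/forallP => B; apply/implyP => /andP [sAB sB].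
    by rewrite (mA B sB sAB).
  exists (exist _ A lc) => /=; by apply: (subsetP gA); rewrite inE.
- move=> x y g gx gy; apply: val_inj; exact: comp_meet (valP x) (valP y) gx gy.
- move=> x g gx; rewrite /= /cc_lab; case: pickP => [d dx|none]; last by rewrite none in gx.
  exact: slc_lab (andP (valP x)).1 gx dx.
- move=> x y /= /andP [xy /existsP [g /andP [gx /existsP [d /andP [dy r]]]]].
  rewrite /cc_lab; case: pickP => [g' g'x|none]; last by rewrite none in gx.
  case: pickP => [d' d'y|none]; last by rewrite none in dy.
  move=> E.
  have sx := (andP (valP x)).1; have sy := (andP (valP y)).1.
  have U : same_label_connected e T (val x :|: val y).
    apply: (union_slc2 sx sy gx dy).
      by rewrite (slc_lab sx gx g'x) E (slc_lab sy d'y dy).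
    by apply: connect1; rewrite /R /= !inE gx dy orbT r.
  have ex := lc_max (valP x) U (subsetUl _ _).
  have ey := lc_max (valP y) U (subsetUr _ _).
  by move/eqP: xy; apply; apply: val_inj; rewrite -ex ey.
- by move=> x; case/andP: (valP x) => /and4P [].
- move=> x y xy; rewrite /= /cc_adj; split.
    by case/andP=> _ /existsP [g /andP [gx /existsP [d /andP [dy r]]]]; exists g, d.
  move=> [g [d [gx dy r]]]; apply/andP; split; first by apply/eqP.
  by apply/existsP; exists g; rewrite gx; apply/existsP; exists d; rewrite dy.
Qed.

Lemma cert_transport (H H2 : lgraph (label V k)) (f : lnode H -> lnode H2)
  (S2 : lnode H2 -> {set col V k}) :
  bijective f -> (forall x y, ladj H2 (f x) (f y) = ladj H x y) ->
  (forall x, llab H2 (f x) = llab H x) ->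
  certificate e T S2 -> certificate e T (fun x => S2 (f x)).
Proof.
move=> fb fadj flab [nS [cS [cov [dis [lab [adl [ic adj]]]]]]].
have finj := bij_inj fb.
case: fb => g fg gf.
split; [|split; [|split; [|split; [|split; [|split; [|split]]]]]].
- by move=> x; apply: nS.
- by move=> x; apply: cS.
- by move=> d /cov [y dy]; exists (g y); rewrite gf.
- by move=> x y d dx dy; apply: finj; apply: dis dx dy.
- by move=> x d dx; rewrite -flab; apply: lab.
- by move=> x y; rewrite -fadj -!flab; apply: adl.
- by move=> x; apply: ic.
- move=> x y xy; rewrite -fadj; apply: adj => E; apply: xy; exact: finj E.
Qed.
End D.

Section E.
Variables (V : finType) (e : rel V) (k : nat) (T : {set V}) (v : V).
Variables (H : lgraph (label V k)) (S : lnode H -> {set col V k}).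
Hypothesis cert : certificate e T S.

Let E := @eqlab_adj V k v H.

Lemma ladj_sym : forall x y, ladj H x y -> ladj H y x.
Proof.
case: cert => nS [cS [cov [dis [lab [adl [ic adj]]]]]].
move=> x y a.
have xy : x <> y by move=> exy; move: a; rewrite exy => /adl.
apply/(adj y x (fun h => xy (esym h))).
case/(adj x y xy): a => g [d [gx dy r]]; exists d, g; by rewrite radj_sym.
Qed.

Lemma E_sym : symmetric E.
Proof.
move=> x y; rewrite /E /eqlab_adj eq_sym.
by apply/idP/idP => /andP [a ->]; rewrite ladj_sym.
Qed.

Lemma Ecs : connect_sym E.
Proof. exact: sym_connect_sym E_sym. Qed.

Lemma lab'_const x y : connect E x y -> lab' v x = lab' v y.
Proof.
apply: (connect_pind (P := fun z => lab' v x = lab' v z)) => // a b _ /andP [_ /eqP ->] //.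
Qed.

Lemma block_eq (a b y : lnode H) : y \in block v a -> y \in block v b -> block v a = block v b.
Proof.
rewrite !inE => ay by_.
have ab : connect E a b by apply: connect_trans ay _; rewrite Ecs.
apply/setP => z; rewrite !inE; apply/idP/idP => h.
  by apply: connect_trans h; rewrite Ecs.
exact: connect_trans ab h.
Qed.

Lemma cnode_rep (B : @cnode V k v H) : exists b, val B = block v b.
Proof. by case: B => /= B /imsetP [b _ ->]; exists b. Qed.

Lemma clab_val (B : @cnode V k v H) (x : lnode H) : x \in val B -> clab B = lab' v x.
Proof.
have [b Bb] := cnode_rep B; rewrite /clab Bb => xB.
case: pickP => [y yB|none]; last by rewrite none in xB.
rewrite inE in yB; rewrite inE in xB.
by rewrite -(lab'_const yB) -(lab'_const xB).
Qed.

Lemma restr_restr (g : col V k) : restr (T :\ v) g = restr_lab (~: [set v]) (restr T g).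
Proof.
apply/ffunP => u; rewrite !ffunE !inE.
by case: (u == v); case: (u \in T).
Qed.

Definition Sc (B : @cnode V k v H) : {set col V k} := \bigcup_(x in val B) S x.

Lemma cnode_eq (B C : @cnode V k v H) (x : lnode H) : x \in val B -> x \in val C -> B = C.
Proof.
have [b Bb] := cnode_rep B; have [c Cc] := cnode_rep C.
rewrite Bb Cc => xb xc; apply: val_inj; rewrite Bb Cc; exact: block_eq xb xc.
Qed.

Lemma Sc_cert : certificate e (T :\ v) (H := contracted v H) Sc.
Proof.
case: cert => nS [cS [cov [dis [lab [adl [ic adj]]]]]].
split; [|split; [|split; [|split; [|split; [|split; [|split]]]]]].
- move=> B; have [b Bb] := cnode_rep B.
  case/set0Pn: (nS b) => g gb; apply/set0Pn; exists g; apply/bigcupP; exists b => //.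
  by rewrite Bb inE connect0.
- by move=> B g /bigcupP [x _ gx]; apply: cS gx.
- move=> g /cov [x gx]; exists (cblock v x); apply/bigcupP; exists x => //.
  by rewrite /= inE connect0.
- move=> B C g /bigcupP [x xB gx] /bigcupP [y yC gy].
  have exy := dis _ _ _ gx gy; subst y; exact: cnode_eq xB yC.
- move=> B g /bigcupP [x xB gx] /=.
  by rewrite (clab_val xB) restr_restr (lab _ _ gx).
- move=> B C /= /andP [BC /existsP [x /andP [xB /existsP [y /andP [yC a]]]]].
  rewrite (clab_val xB) (clab_val yC) => el.
  have [b Bb] := cnode_rep B.
  have xyE : E x y by rewrite /E /eqlab_adj a el eqxx.
  have yB : y \in val B.
    rewrite Bb inE; rewrite Bb inE in xB; exact: connect_trans xB (connect1 xyE).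
  by move/eqP: BC; apply; exact: cnode_eq yB yC.
- move=> B; have [b Bb] := cnode_rep B.
  have sub : forall x, x \in val B -> S x \subset Sc B.
    by move=> x xB; apply/subsetP => g gx; apply/bigcupP; exists x.
  apply/forall_inP => g /bigcupP [x xB gx]; apply/forall_inP => d /bigcupP [y yB dy].
  have P : forall z, connect E x z -> forall d, d \in S z -> connect (R (Sc B)) g d.
    move=> z; apply: (connect_pind (P := fun z => forall d, d \in S z -> connect (R (Sc B)) g d)).
    + by move=> d' d'x; apply: R_lift (sub x xB) (icP (ic x) gx d'x).
    + move=> a b' xa eab Pa d' d'b; have ab := (andP eab).1.
      have aB : a \in val B by rewrite Bb inE; rewrite Bb inE in xB; exact: connect_trans xB xa.
      have bB : b' \in val B.
        by rewrite Bb inE; rewrite Bb inE in aB; apply: connect_trans aB (connect1 eab).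
      case: (eqVneq a b') => [eq|ne]; first by subst b'; exact: Pa.
      have [a0 [b0 [a0a b0b r]]] := (adj a b' (elimN eqP ne)).1 ab.
      apply: connect_trans (Pa a0 a0a) _.
      apply: connect_trans (connect1 (_ : R (Sc B) a0 b0)) _.
        by rewrite /R /= r (subsetP (sub a aB)) // (subsetP (sub b' bB)).
      exact: R_lift (sub b' bB) (icP (ic b') b0b d'b).
  apply: (P y) dy.
  rewrite Bb !inE in xB yB; apply: connect_trans yB; by rewrite Ecs.
- move=> B C BC; rewrite /= /cadj; split.
    case/andP=> _ /existsP [x /andP [xB /existsP [y /andP [yC a]]]].
    have xy : x <> y by move=> exy; subst y; apply: BC; exact: cnode_eq xB yC.
    case/(adj x y xy): a => g [d [gx dy r]]; exists g, d; split => //.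
      by apply/bigcupP; exists x.
    by apply/bigcupP; exists y.
  move=> [g [d [/bigcupP [x xB gx] /bigcupP [y yC dy] r]]].
  have xy : x <> y by move=> exy; subst y; apply: BC; exact: cnode_eq xB yC.
  apply/andP; split; first by apply/eqP.
  apply/existsP; exists x; rewrite xB; apply/existsP; exists y; rewrite yC /=.
  by apply/(adj x y xy); exists g, d.
Qed.
End E.
Unset Implicit Arguments.

Theorem lemma2 (V : finType) (e : rel V) (k : nat) (T : {set V}) (v : V)
  (H : lgraph (label V k)) :
  symmetric e -> irreflexive e -> 0 < k -> v \in T ->
  lab_iso H (Cc e k T) ->
  lab_iso (contracted v H) (Cc e k (T :\ v)) /\
  (forall S : lnode H -> {set col V k}, certificate e T S ->
     exists S' : lnode (contracted v H) -> {set col V k},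
       certificate e (T :\ v) S' /\
       (forall g x, is_kcoloring e g -> g \in S x -> g \in S' (cblock v x))).
Proof.
move=> _ _ _ _ [f [fb fadj flab]].
have c0 := cert_transport fb fadj flab (Cc_cert e k T).
split.
  exact: cert_iso (Sc_cert v c0).
move=> S cS; exists (Sc (v:=v) S); split; first exact: Sc_cert.
move=> g x _ gx; apply/bigcupP; exists x => //.
by rewrite /= inE connect0.
Qed.
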